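(* Let $A$ be a MON-1qfa over $\Sigma$ and let $L_A\subseteq\Sigma^*$ be a language recognized by $A$ with cut-point $\lambda$ isolated by $\delta$. Then there exists a Latvian automaton $A'$ recognizing $L_{A'}=L_A$ with cut-point $\lambda'=\frac12$ isolated by $\delta'=\frac{\delta}{2\cdot\max(\lambda,1-\lambda)}$.
   Context: A MON-1qfa (measure-only one-way quantum finite automaton) over a finite alphabet $\Sigma$ is a tuple $A=\langle\Sigma\cup\{\#\},(O_c)_{c\in\Sigma\cup\{\#\}},\pi_0,F\rangle$, where $\pi_0\in\mathbb{C}^{1\times m}$ has norm $1$, each $O_c$ is an observable, i.e. a Hermitian $m\times m$ matrix with spectral decomposition $O_c=\sum_{r\in V(O_c)} r\,P_c(r)$ ($V(O_c)$ its set of eigenvalues, $P_c(r)$ the orthogonal projector onto the eigenspace of $r$), and $F\subseteq V(O_\#)$. On input $x=x_1\cdots x_n\in\Sigma^*$ the automaton starts in $\pi_0$, performs successively the measurements $O_{x_1},\dots,O_{x_n}$ and finally $O_\#$, and accepts iff the outcome of the last measurement lies in $F$. Formally, with $\rho_0=\pi_0^\dagger\pi_0$ and $\rho_i=\sum_{r\in V(O_{x_i})}P_{x_i}(r)\rho_{i-1}P_{x_i}(r)$, the acceptance probability is $p_A(x)=\sum_{r\in F}\mathrm{tr}(P_\#(r)\rho_n)$. A Latvian automaton is a one-way quantum automaton $A'=(Q,\Sigma,\{\mathcal{A}_a\},q_0,Q_{acc})$ with finite set of basis states $Q$, initial state $|q_0\rangle$, where for each $a\in\Sigma\cup\{\cent,\$\}$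 (with end-markers $\cent,\$$), $\mathcal{A}_a=M_aU_a$ consists of a unitary $U_a$ followed by a projective measurement $M_a$ (a family of orthogonal projectors summing to the identity), and $M_\$$ is the measurement with respect to the decomposition into the span of $Q_{acc}$ and its orthogonal complement; on input $w$ it processes $\cent w\$$ symbol by symbol (applying $U_a$ then $M_a$) and accepts iff the final measurement yields the accepting subspace; $p_{A'}(w)$ denotes the acceptance probability. An automaton $B$ with acceptance probability $p_B$ recognizes $L$ with cut-point $\lambda$ isolated by $\delta>0$ iff for all words $x$: $x\in L\Leftrightarrow p_B(x)>\lambda$, and $|p_B(x)-\lambda|\ge\delta$. *)

(* Defs.v *)
From mathcomp Require Import all_boot all_order all_algebra.
From mathcomp Require Import reals.
From mathcomp Require Import complex.
Set Implicit Arguments. Unset Strict Implicit. Unset Printing Implicit Defensive.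
Import Order.TTheory GRing.Theory Num.Theory.
Local Open Scope ring_scope.

Section QFA.
Variable R : realType.
Local Notation C := R[i].

Definition adj m n (A : 'M[C]_(m, n)) : 'M[C]_(n, m) := (map_mx (@conjc R) A)^T.

Definition hermitian n (A : 'M[C]_n) : Prop := adj A = A.

Definition is_orth_proj n (P : 'M[C]_n) : Prop := adj P = P /\ P *m P = P.

Definition unitary n (U : 'M[C]_n) : Prop := U *m adj U = 1%:M /\ adj U *m U = 1%:M.

Definition is_measurement n (Ps : seq 'M[C]_n) : Prop :=
  [/\ forall P, P \in Ps -> is_orth_proj P,
      forall i j, (i < size Ps)%N -> (j < size Ps)%N -> i != j ->
        nth 0 Ps i *m nth 0 Ps j = 0
    & \sum_(P <- Ps) P = 1%:M].

Definition spectral_decomp n (O : 'M[C]_n) (d : seq (R * 'M[C]_n)) : Prop :=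
  [/\ uniq (map fst d),
      forall p, p \in d -> p.2 != 0,
      is_measurement (map snd d)
    & O = \sum_(p <- d) (real_complex R p.1 *: p.2)].

(* MON-1qfa; the observable O_# is indexed by None, O_c by Some c. *)
Record mon1qfa (Sigma : finType) : Type := Mon1qfa {
  mq_m : nat;
  mq_O : option Sigma -> 'M[C]_mq_m;
  mq_dec : option Sigma -> seq (R * 'M[C]_mq_m);
  mq_pi0 : 'rV[C]_mq_m;
  mq_F : pred R;
  mq_herm : forall c, hermitian (mq_O c);
  mq_spec : forall c, spectral_decomp (mq_O c) (mq_dec c);
  mq_norm : mq_pi0 *m adj mq_pi0 = 1%:M;
  mq_Fsub : forall r, mq_F r -> r \in map fst (mq_dec None)
}.

Definition meas_step n (d : seq (R * 'M[C]_n)) (rho : 'M[C]_n) : 'M[C]_n :=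
  \sum_(p <- d) (p.2 *m rho *m p.2).

Definition mon_rho (Sigma : finType) (A : mon1qfa Sigma) (x : seq Sigma)
  : 'M[C]_(mq_m A) :=
  foldl (fun rho c => meas_step (mq_dec A (Some c)) rho)
        (adj (mq_pi0 A) *m mq_pi0 A) x.

(* acceptance probability p_A(x) (a real number: we take the real part of the
   complex trace, which is real) *)
Definition mon_prob (Sigma : finType) (A : mon1qfa Sigma) (x : seq Sigma) : R :=
  @complex.Re R (\sum_(p <- mq_dec A None | mq_F A p.1) \tr (p.2 *m mon_rho A x)).

Inductive esym (Sigma : Type) := ESym of Sigma | ECent | EDollar.

(* The measurement M_a is
   given for a in Sigma (Some a) and for ¢ (None); M_$ is fixed to be the
   measurement {span Q_acc, its orthogonal complement}. *)
Record latvian (Sigma : finType) : Type := Latvian {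
  lv_n : nat;
  lv_q0 : 'I_lv_n;
  lv_acc : {set 'I_lv_n};
  lv_U : esym Sigma -> 'M[C]_lv_n;
  lv_M : option Sigma -> seq 'M[C]_lv_n;
  lv_unitary : forall a, unitary (lv_U a);
  lv_meas : forall a, is_measurement (lv_M a)
}.

Definition lv_Pacc (Sigma : finType) (A : latvian Sigma) : 'M[C]_(lv_n A) :=
  diag_mx (\row_q (q \in lv_acc A)%:R).

Definition lat_step n (U : 'M[C]_n) (Ms : seq 'M[C]_n) (rho : 'M[C]_n) :=
  \sum_(P <- Ms) (P *m (U *m rho *m adj U) *m P).

Definition lat_rho (Sigma : finType) (A : latvian Sigma) (w : seq Sigma)
  : 'M[C]_(lv_n A) :=
  foldl (fun rho a => lat_step (lv_U A (ESym a)) (lv_M A (Some a)) rho)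
        (lat_step (lv_U A (ECent _)) (lv_M A None)
                  (delta_mx (lv_q0 A) (lv_q0 A))) w.

Definition lat_prob (Sigma : finType) (A : latvian Sigma) (w : seq Sigma) : R :=
  @complex.Re R (\tr (lv_Pacc A *m (lv_U A (EDollar _) *m lat_rho A w *m adj (lv_U A (EDollar _)))
           *m lv_Pacc A)).

Definition recognizes (Sigma : finType) (p : seq Sigma -> R)
  (L : seq Sigma -> Prop) (lambda delta : R) : Prop :=
  0 < delta /\
  forall x, (L x <-> lambda < p x) /\ delta <= `|p x - lambda|.

End QFA.

(* Main.v *)
Require Import Defs.
From mathcomp Require Import all_boot all_order all_algebra.
From mathcomp Require Import reals complex.
From mathcomp Require Import ring lra.
Import Order.TTheory GRing.Theory Num.Theory.
Local Open Scope ring_scope.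

Section H.
Context {R : realType}.
Local Notation C := R[i].

Lemma adjcM m n p (A : 'M[C]_(m,n)) (B : 'M[C]_(n,p)) : adj (A *m B) = adj B *m adj A.
Proof. by rewrite /adj map_mxM trmx_mul. Qed.
Lemma adjcD m n (A B : 'M[C]_(m,n)) : adj (A + B) = adj A + adj B.
Proof. by rewrite /adj map_mxD linearD. Qed.
Lemma adjcN m n (A : 'M[C]_(m,n)) : adj (- A) = - adj A.
Proof. by rewrite /adj map_mxN linearN. Qed.
Lemma adjcB m n (A B : 'M[C]_(m,n)) : adj (A - B) = adj A - adj B.
Proof. by rewrite adjcD adjcN. Qed.
Lemma adjc0 m n : adj (0 : 'M[C]_(m,n)) = 0.
Proof. by rewrite /adj map_mx0 trmx0. Qed.
Lemma adjc1 n : adj (1%:M : 'M[C]_n) = 1%:M.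
Proof. by rewrite /adj map_mx1 trmx1. Qed.
Lemma adjcK m n (A : 'M[C]_(m,n)) : adj (adj A) = A.
Proof. by apply/matrixP => i j; rewrite !mxE conjcK. Qed.
Lemma adjcZ m n (k : C) (A : 'M[C]_(m,n)) : adj (k *: A) = conjc k *: adj A.
Proof. by apply/matrixP => i j; rewrite !mxE rmorphM. Qed.
Lemma adjc_block m1 m2 n1 n2 (a : 'M[C]_(m1,n1)) (b : 'M[C]_(m1,n2)) (c : 'M[C]_(m2,n1)) (d : 'M[C]_(m2,n2)) :
  adj (block_mx a b c d) = block_mx (adj a) (adj c) (adj b) (adj d).
Proof. by rewrite /adj map_block_mx tr_block_mx. Qed.
Lemma adjc_delta m n (i : 'I_m) (j : 'I_n) : adj (delta_mx i j : 'M[C]_(m,n)) = delta_mx j i.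
Proof. by apply/matrixP => a b; rewrite !mxE conjc_nat andbC. Qed.
Lemma adjc_col m1 m2 n (a : 'M[C]_(m1,n)) (b : 'M[C]_(m2,n)) : adj (col_mx a b) = row_mx (adj a) (adj b).
Proof. by rewrite /adj map_col_mx tr_col_mx. Qed.
End H.

Section H.
Context {R : realType}.
Local Notation C := R[i].

Definition dil {n} (X : 'M[C]_n) : 'M[C]_(n + n) :=
  block_mx X (1%:M - X *m adj X) (1%:M - adj X *m X) (- adj X).

Lemma dil_unitary n (X : 'M[C]_n) : X *m adj X *m X = X -> unitary (dil X).
Proof.
move=> h.
have h' : adj X *m X *m adj X = adj X.
  by have := congr1 (@adj R n n) h; rewrite !adjcM adjcK mulmxA.
have e1 : (X *m adj X) *m (X *m adj X) = X *m adj X by rewrite mulmxA h.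
have e2 : (adj X *m X) *m (adj X *m X) = adj X *m X by rewrite mulmxA h'.
rewrite /unitary /dil adjc_block !adjcB !adjcN adjc1 !adjcM adjcK.
rewrite !mulmx_block.
rewrite !(mulmxBl, mulmxBr, mul1mx, mulmx1, mulmxN, mulNmx, opprK, mulmxA, h, h').
rewrite !subrr !subr0 !addNr !addr0 !subrK [X *m adj X + _]addrC [adj X *m X + _]addrC !subrK -scalar_mx_block.
by split.
Qed.
End H.

Section H.
Context {R : realType}.
Local Notation C := R[i].

Definition lc {n} (Q : 'M[C]_n) (x y : C) := x *: Q + y *: (1%:M - Q).

Lemma lcM n (Q : 'M[C]_n) x y x' y' : Q *m Q = Q ->
  lc Q x y *m lc Q x' y' = lc Q (x * x') (y * y').
Proof.
move=> hQ.
have h1 : Q *m (1%:M - Q) = 0 by rewrite mulmxBr hQ mulmx1 subrr.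
have h2 : (1%:M - Q) *m Q = 0 by rewrite mulmxBl hQ mul1mx subrr.
have h3 : (1%:M - Q) *m (1%:M - Q) = 1%:M - Q by rewrite mulmxBl mul1mx h1 subr0.
rewrite /lc mulmxDl !mulmxDr -!scalemxAl -!scalemxAr h1 h2 h3 hQ !scaler0 addr0 add0r.
by rewrite !scalerA.
Qed.

Lemma lcD n (Q : 'M[C]_n) x y x' y' : lc Q x y + lc Q x' y' = lc Q (x + x') (y + y').
Proof. by rewrite /lc !scalerDl addrACA. Qed.

Lemma lc11 n (Q : 'M[C]_n) : lc Q 1 1 = 1%:M.
Proof. by rewrite /lc !scale1r addrC subrK. Qed.

Lemma adj_lc n (Q : 'M[C]_n) x y : adj Q = Q -> adj (lc Q x y) = lc Q (conjc x) (conjc y).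
Proof. by move=> h; rewrite /lc adjcD !adjcZ adjcB adjc1 h. Qed.

Definition fin {n} (T S : 'M[C]_n) : 'M[C]_(n + n) := block_mx T S S (- T).

Lemma fin_unitary n (T S : 'M[C]_n) : adj T = T -> adj S = S -> T *m S = S *m T ->
  T *m T + S *m S = 1%:M -> unitary (fin T S).
Proof.
move=> hT hS hc h1.
have hU : adj (fin T S) = fin T S by rewrite /fin adjc_block adjcN hT hS.
rewrite /unitary hU /fin mulmx_block !(mulNmx, mulmxN, opprK).
rewrite hc subrr [S *m S + _]addrC h1 -scalar_mx_block; by split.
Qed.
End H.

Section H.
Context {R : realType}.
Local Notation C := R[i].
Lemma trZ n (x : C) (M : 'M[C]_n) : \tr (x *: M) = x * \tr M.
Proof.
rewrite /mxtrace mulr_sumr; apply: eq_bigr => i _; by rewrite mxE.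
Qed.
Lemma tr_lc n (Q rho : 'M[C]_n) x y :
  \tr (lc Q x y *m rho) = x * \tr (Q *m rho) + y * (\tr rho - \tr (Q *m rho)).
Proof.
rewrite /lc mulmxDl -!scalemxAl mulmxBl mul1mx mxtraceD !mxtraceZ.
by rewrite (raddfB (@mxtrace _ n)) /=.
Qed.
End H.

Section H.
Context {R : realType}.
Local Notation C := R[i].

Lemma adjc_sum n (I : Type) (r : seq I) (P : pred I) (F : I -> 'M[C]_n) :
  adj (\sum_(i <- r | P i) F i) = \sum_(i <- r | P i) adj (F i).
Proof.
elim: r => [|a r IH]; first by rewrite !big_nil adjc0.
by rewrite !big_cons; case: (P a); rewrite ?adjcD IH.
Qed.

Lemma projQ n (d : seq (R * 'M[C]_n)) (f : pred R) :
 (forall p, p \in d -> adj p.2 = p.2 /\ p.2 *m p.2 = p.2) ->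
 (forall i j, (i < size d)%N -> (j < size d)%N -> i != j ->
    (nth (0,0) d i).2 *m (nth (0,0) d j).2 = 0) ->
 adj (\sum_(p <- d | f p.1) p.2) = \sum_(p <- d | f p.1) p.2 /\
 (\sum_(p <- d | f p.1) p.2) *m (\sum_(p <- d | f p.1) p.2) = \sum_(p <- d | f p.1) p.2.
Proof.
elim: d => [|p d IH] hp ho; first by rewrite !big_nil adjc0 mul0mx.
have hp' : forall q, q \in d -> adj q.2 = q.2 /\ q.2 *m q.2 = q.2.
  by move=> q hq; apply: hp; rewrite inE hq orbT.
have ho' : forall i j, (i < size d)%N -> (j < size d)%N -> i != j ->
    (nth (0,0) d i).2 *m (nth (0,0) d j).2 = 0.
  by move=> i j hi hj hij; apply: (ho i.+1 j.+1).
have [IH1 IH2] := IH hp' ho'.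
have [P1 P2] := hp p (mem_head _ _).
have hl : forall q, q \in d -> p.2 *m q.2 = 0.
  move=> q hq; have := ho 0%N (index q d).+1 isT; rewrite /= nth_index // ltnS index_mem.
  by move=> h; apply: h.
have hr : forall q, q \in d -> q.2 *m p.2 = 0.
  move=> q hq; have := ho (index q d).+1 0%N; rewrite /= nth_index // ltnS index_mem.
  by move=> h; apply: h.
rewrite big_cons; case: (f p.1) => //.
split; first by rewrite adjcD P1 IH1.
rewrite mulmxDl !mulmxDr P2 IH2 mulmx_sumr mulmx_suml.
rewrite big1_seq; last by move=> q /andP[_ hq]; apply: hl.
rewrite big1_seq; last by move=> q /andP[_ hq]; apply: hr.
by rewrite addr0 add0r.
Qed.
End H.

Section H.
Context {R : realType}.
Local Notation C := R[i].

Lemma meas_hyps n (d : seq (R * 'M[C]_n)) : is_measurement (map snd d) ->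
 [/\ (forall p, p \in d -> adj p.2 = p.2 /\ p.2 *m p.2 = p.2),
 (forall i j, (i < size d)%N -> (j < size d)%N -> i != j ->
    (nth (0,0) d i).2 *m (nth (0,0) d j).2 = 0) &
 \sum_(p <- d) p.2 = 1%:M].
Proof.
case=> h1 h2 h3; split.
- by move=> p hp; apply: h1; apply: map_f.
- move=> i j hi hj hij; have := h2 i j; rewrite size_map !(nth_map (0,0)) //.
  by apply.
- by rewrite big_map in h3.
Qed.

Definition bd {n} (P : 'M[C]_n) : 'M[C]_(n + n) := block_mx P 0 0 P.

Lemma bd_sum n (I : Type) (r : seq I) (F : I -> 'M[C]_n) :
  \sum_(i <- r) bd (F i) = bd (\sum_(i <- r) F i).
Proof.
elim: r => [|a r IH]; first by rewrite !big_nil /bd block_mx0.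
by rewrite !big_cons IH /bd add_block_mx !addr0.
Qed.

Lemma bd_meas n (Ps : seq 'M[C]_n) : is_measurement Ps -> is_measurement (map bd Ps).
Proof.
case=> h1 h2 h3; split.
- move=> Q /mapP[P hP ->]; have [a b] := h1 P hP.
  by split; rewrite /bd ?adjc_block ?adjc0 ?mulmx_block ?a ?b ?mulmx0 ?mul0mx ?addr0 ?add0r.
- move=> i j; rewrite size_map => hi hj hij; rewrite !(nth_map 0) //.
  by rewrite /bd mulmx_block !mulmx0 !mul0mx !addr0 !add0r h2 // block_mx0.
- by rewrite big_map bd_sum h3 /bd -scalar_mx_block.
Qed.

Lemma trace_step n (d : seq (R * 'M[C]_n)) rho : is_measurement (map snd d) ->
  \tr (meas_step d rho) = \tr rho.
Proof.
case/meas_hyps => h1 _ h3.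
rewrite /meas_step raddf_sum /=.
rewrite (eq_big_seq (fun p => \tr (p.2 *m rho))); last first.
  by move=> p hp; rewrite mxtrace_mulC mulmxA (proj2 (h1 p hp)).
by rewrite -raddf_sum -mulmx_suml h3 mul1mx.
Qed.
End H.

Section H.
Context {R : realType}.
Local Notation C := R[i].

Lemma pis_X m (v e : 'cV[C]_m) : adj v *m v = 1%:M -> adj e *m e = 1%:M ->
  let X := v *m adj e in X *m adj X *m X = X.
Proof.
move=> hv he X; rewrite /X adjcM adjcK.
by rewrite !mulmxA -(mulmxA v) he mulmx1 -(mulmxA v) hv mulmx1.
Qed.

Lemma dil_state m (v e : 'cV[C]_m) : adj v *m v = 1%:M -> adj e *m e = 1%:M ->
  let X := v *m adj e in dil X *m col_mx e 0 = col_mx v 0.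
Proof.
move=> hv he X; rewrite /dil mul_block_col !mulmx0 !addr0 /X.
rewrite -mulmxA he mulmx1 adjcM adjcK mulmxBl mul1mx -!mulmxA he mulmx1 hv mulmx1 subrr.
by [].
Qed.

Lemma blk_sum n (I : Type) (r : seq I) (F : I -> 'M[C]_n) :
  \sum_(i <- r) block_mx (F i) 0 0 0 = block_mx (\sum_(i <- r) F i) 0 0 (0 : 'M[C]_n).
Proof.
elim: r => [|a r IH]; first by rewrite !big_nil block_mx0.
by rewrite !big_cons IH add_block_mx !addr0.
Qed.

Lemma step_bd n (d : seq (R * 'M[C]_n)) rho :
  lat_step 1%:M (map bd (map snd d)) (block_mx rho 0 0 0) = block_mx (meas_step d rho) 0 0 0.
Proof.
rewrite /lat_step /meas_step adjc1 mul1mx mulmx1 !big_map -blk_sum.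
apply: eq_bigr => p _.
rewrite /bd !mulmx_block !mulmx0 !mul0mx !addr0.
by rewrite !(mul0mx _ p.2) !add0r.
Qed.

End H.

Section H.
Context {R : realType}.
Local Notation C := R[i].
Lemma fin_tr n (T S rho : 'M[C]_n) : adj T = T -> adj S = S ->
  \tr (block_mx 1%:M 0 0 0 *m (fin T S *m block_mx rho 0 0 0 *m adj (fin T S)) *m block_mx 1%:M 0 0 (0 : 'M[C]_n))
  = \tr (T *m T *m rho).
Proof.
move=> hT hS.
rewrite /fin adjc_block adjcN hT hS.
rewrite mulmx_block.
rewrite ?mulmx0 ?addr0 ?add0r.
rewrite mulmx_block.
rewrite ?mulmx0 ?mul0mx ?mulmx1 ?mul1mx ?addr0 ?add0r.
rewrite mulmx_block.
rewrite ?mulmx0 ?mul0mx ?mulmx1 ?mul1mx ?addr0 ?add0r.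
rewrite mulmx_block.
rewrite ?mulmx0 ?mul0mx ?mulmx1 ?mul1mx ?addr0 ?add0r.
rewrite mxtrace_block.
rewrite ?mxtrace0 ?addr0.
Time by rewrite mxtrace_mulC mulmxA.
Qed.
End H.

Section Cons.
Context {R : realType} {Sigma : finType} (A : mon1qfa R Sigma) (c1 c2 : R).
Local Notation C := R[i].
Local Notation m := (mq_m A).

Lemma m_pos : (0 < m)%N.
Proof.
rewrite lt0n; apply/eqP => hm.
have := congr1 (fun M : 'M[C]_1 => M 0 0) (mq_norm A).
rewrite /= !mxE big1 => [|k _]; last first.
  have : (nat_of_ord k < 0)%N by rewrite -hm ltn_ord.
  by [].
by move/eqP; rewrite eq_sym oner_eq0.
Qed.

Definition i0 : 'I_m := Ordinal m_pos.
Definition vv : 'cV[C]_m := adj (mq_pi0 A).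
Definition ee : 'cV[C]_m := delta_mx i0 0.
Definition XX := vv *m adj ee.
Definition QQ : 'M[C]_m := \sum_(p <- mq_dec A None | mq_F A p.1) p.2.
Definition sq (c : R) : C := real_complex R (Num.sqrt c).
Definition TT := lc QQ (sq c1) (sq c2).
Definition SS := lc QQ (sq (1 - c1)) (sq (1 - c2)).

Lemma QQ_proj : adj QQ = QQ /\ QQ *m QQ = QQ.
Proof.
have [_ _ hm _] := mq_spec A None.
have [a b _] := @meas_hyps R m _ hm.
exact: projQ.
Qed.

Lemma vv_norm : adj vv *m vv = 1%:M.
Proof. by rewrite /vv adjcK mq_norm. Qed.

Lemma ee_norm : adj ee *m ee = 1%:M.
Proof.
rewrite /ee adjc_delta mul_delta_mx.
by apply/matrixP => i j; rewrite !ord1 !mxE.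
Qed.

Lemma sq_real c : conjc (sq c) = sq c.
Proof. by rewrite /sq conjc_real. Qed.

Lemma sqsq c : 0 <= c -> sq c * sq c = real_complex R c.
Proof. by move=> h; rewrite /sq -rmorphM /= -expr2 sqr_sqrtr. Qed.

Lemma TS_props : (0 <= c1 <= 1) -> (0 <= c2 <= 1) -> unitary (fin TT SS).
Proof.
move=> /andP[a1 b1] /andP[a2 b2].
have [hQ1 hQ2] := QQ_proj.
apply: fin_unitary.
- by rewrite /TT adj_lc // !sq_real.
- by rewrite /SS adj_lc // !sq_real.
- by rewrite /TT /SS !lcM // [sq c1 * _]mulrC [sq c2 * _]mulrC.
rewrite /TT /SS !lcM // lcD !sqsq ?subr_ge0 // -!rmorphD /= !subrKC.
by rewrite rmorph1 lc11.
Qed.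
End Cons.

Section Cons2.
Context {R : realType} {Sigma : finType} (A : mon1qfa R Sigma) (c1 c2 : R)
  (h1 : 0 <= c1 <= 1) (h2 : 0 <= c2 <= 1).
Local Notation C := R[i].
Local Notation m := (mq_m A).

Definition UU (a : Defs.esym Sigma) : 'M[C]_(m + m) :=
  match a with ESym _ => 1%:M | ECent => dil (XX A) | EDollar => fin (TT A c1 c2) (SS A c1 c2) end.
Definition MM (o : option Sigma) : seq 'M[C]_(m + m) :=
  match o with Some a => map bd (map snd (mq_dec A (Some a))) | None => [:: 1%:M] end.

Lemma UU_unitary a : unitary (UU a).
Proof.
case: a => [a||] /=.
- by rewrite /unitary adjc1 mulmx1.
- by apply: dil_unitary; apply: pis_X; [exact: vv_norm | exact: ee_norm].
- exact: TS_props.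
Qed.

Lemma MM_meas o : is_measurement (MM o).
Proof.
case: o => [a|] /=.
- by have [_ _ hm _] := mq_spec A (Some a); apply: bd_meas.
- split.
  + by move=> P; rewrite inE => /eqP ->; split; rewrite ?adjc1 ?mulmx1.
  + by move=> [|i] [|j].
  + by rewrite big_seq1.
Qed.

Definition Lat : latvian R Sigma :=
  @Latvian R Sigma (m + m) (lshift m (i0 A)) [set q : 'I_(m + m) | (q < m)%N]
    UU MM UU_unitary MM_meas.

Lemma Lat_Pacc : lv_Pacc Lat = block_mx 1%:M 0 0 0.
Proof.
rewrite /lv_Pacc /= -(pid_mx_block _ m m m).
apply/matrixP => i j; rewrite !mxE inE.
have e : (val i == val j) = (i == j) by []. rewrite e.
by case: (i == j); rewrite ?mulr1n ?mulr0n.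
Qed.

Lemma Lat_rho0 : lat_step (dil (XX A)) [:: 1%:M] (delta_mx (lshift m (i0 A)) (lshift m (i0 A)))
  = block_mx (adj (mq_pi0 A) *m mq_pi0 A) 0 0 0.
Proof.
rewrite /lat_step big_seq1 mul1mx mulmx1.
have -> : delta_mx (lshift m (i0 A)) (lshift m (i0 A)) =
  (col_mx (ee A) 0) *m adj (col_mx (ee A) 0 : 'cV[C]_(m + m)).
  by rewrite -delta_mx_ushift adjc_delta mul_delta_mx.
rewrite mulmxA -mulmxA -adjcM dil_state; [|exact: vv_norm|exact: ee_norm].
rewrite adjc_col adjc0 mul_col_row mul0mx mulmx0 /vv adjcK.
by congr block_mx; apply: mul0mx.
Qed.

Lemma Lat_rho x : lat_rho Lat x = block_mx (mon_rho A x) 0 0 0.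
Proof.
rewrite /lat_rho /mon_rho /= Lat_rho0.
elim: x (adj (mq_pi0 A) *m mq_pi0 A) => [|a x IH] rho //=.
by rewrite step_bd IH.
Qed.

Lemma tr_rho x : \tr (mon_rho A x) = 1.
Proof.
rewrite /mon_rho.
have : \tr (adj (mq_pi0 A) *m mq_pi0 A) = 1.
  by rewrite mxtrace_mulC mq_norm mxtrace1.
elim: x (adj (mq_pi0 A) *m mq_pi0 A) => [|a x IH] rho //= h.
apply: IH; rewrite trace_step //.
by have [_ _ hm _] := mq_spec A (Some a).
Qed.

Lemma mon_probE x : mon_prob A x = complex.Re (\tr (QQ A *m mon_rho A x)).
Proof. by rewrite /mon_prob /QQ mulmx_suml (raddf_sum (@mxtrace _ m)). Qed.

Lemma ReD (a b : C) : complex.Re (a + b) = complex.Re a + complex.Re b.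
Proof. by case: a; case: b. Qed.
Lemma ReB (a b : C) : complex.Re (a - b) = complex.Re a - complex.Re b.
Proof. by case: a; case: b. Qed.
Lemma ReMr (k : R) (a : C) : complex.Re (real_complex R k * a) = k * complex.Re a.
Proof. by case: a => x y /=; rewrite mul0r subr0. Qed.

Lemma Lat_prob x : lat_prob Lat x = c1 * mon_prob A x + c2 * (1 - mon_prob A x).
Proof.
have [hQ1 hQ2] := QQ_proj A.
move: h1 h2 => /andP[a1 b1] /andP[a2 b2].
rewrite /lat_prob Lat_Pacc Lat_rho /= fin_tr; last 2 first.
- by rewrite /TT adj_lc // !sq_real.
- by rewrite /SS adj_lc // !sq_real.
rewrite /TT lcM // !sqsq // mon_probE.
rewrite tr_lc tr_rho.
by rewrite ReD !ReMr ReB.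
Qed.
End Cons2.

Lemma scale_rec (R : realType) (p p' lam k d : R) : 0 < k ->
  p' - 1 / 2 = (p - lam) / k ->
  (lam < p <-> 1 / 2 < p') /\ (d <= `|p - lam| -> d / k <= `|p' - 1 / 2|).
Proof.
move=> hk he; split.
- have -> : (1 / 2 < p') = (0 < (p - lam) / k) by rewrite -he subr_gt0.
  rewrite pmulr_lgt0 ?invr_gt0 // subr_gt0 //.
- move=> hd; rewrite he normrM [`|k^-1|]gtr0_norm ?invr_gt0 //.
  by rewrite ler_pM2r ?invr_gt0.
Qed.

Theorem theorem2 (R : realType) (Sigma : finType) (A : mon1qfa R Sigma)
  (L : seq Sigma -> Prop) (lambda delta : R) :
  recognizes (mon_prob A) L lambda delta ->
  exists A' : latvian R Sigma,
    recognizes (lat_prob A') L (1 / 2)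
      (delta / (2 * Num.max lambda (1 - lambda))).
Proof.
move=> [hd hx].
have [hl|hl] := lerP (1 / 2) lambda.
- have hk : 0 < 2 * lambda by lra.
  have hc1 : 0 <= 1 / (2 * lambda) <= 1.
    apply/andP; split; first by rewrite divr_ge0 // ltW.
    by rewrite ler_pdivrMr // mul1r; lra.
  have hc2 : 0 <= (0:R) <= 1 by rewrite lexx ler01.
  exists (Lat A _ _ hc1 hc2).
  rewrite max_l; last by lra.
  split; first by rewrite divr_gt0.
  move=> x; rewrite Lat_prob.
  have [h1 h2] := hx x.
  have := @scale_rec R (mon_prob A x) (1 / (2 * lambda) * mon_prob A x + 0 * (1 - mon_prob A x))
    lambda (2 * lambda) delta hk.
  case.
    by field; lra.
  move=> e1 e2; split; last exact: e2.
  by rewrite -e1.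
- have hk : 0 < 2 * (1 - lambda) by lra.
  have hc1 : 0 <= (1:R) <= 1 by rewrite lexx ler01.
  have hc2 : 0 <= 1 - 1 / (2 * (1 - lambda)) <= 1.
    apply/andP; split; last by rewrite gerBl divr_ge0 // ltW.
    by rewrite subr_ge0 ler_pdivrMr // mul1r; lra.
  exists (Lat A _ _ hc1 hc2).
  rewrite max_r; last by lra.
  split; first by rewrite divr_gt0.
  move=> x; rewrite Lat_prob.
  have [h1 h2] := hx x.
  have := @scale_rec R (mon_prob A x) (1 * mon_prob A x + (1 - 1 / (2 * (1 - lambda))) * (1 - mon_prob A x))
    lambda (2 * (1 - lambda)) delta hk.
  case.
    by field; lra.
  move=> e1 e2; split; last exact: e2.
  by rewrite -e1.
Qed.
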